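(* Let $S$ be a smooth Del Pezzo surface, let $E\subset S$ be a smooth effective anticanonical divisor, let $\beta\in H_2(S,\mathbb{Z})$ be an effective non-zero primitive curve class, and set $w=E\cdot\beta$. Let $\{N_S[dw]\}_{d\ge1}$ and $\{I_{K_S}(d\beta)\}_{d\ge1}$ be two arbitrary sequences of rational numbers, and assume that for all $d\ge1$, $$N_S[dw]=(-1)^{dw+1}\,dw\,I_{K_S}(d\beta).$$ Define sequences of rational numbers $\{n_{d\beta}\}_{d\ge1}$ and $\{n_S[dw]\}_{d\ge1}$ by the equalities of formal power series in $q$ $$\sum_{l=1}^{\infty}I_{K_S}(l\beta)\,q^l=\sum_{d=1}^{\infty}n_{d\beta}\sum_{k=1}^{\infty}\frac{1}{k^3}\,q^{dk},$$ $$\sum_{l=1}^{\infty}N_S[lw]\,q^l=\sum_{d=1}^{\infty}n_S[dw]\sum_{k=1}^{\infty}\frac{1}{k^2}\binom{k(dw-1)-1}{k-1}\,q^{dk}.$$ Then $n_S[dw]\in\mathbb{Z}$ for all $d\ge1$ if and only if $dw\cdot n_{d\beta}\in\mathbb{Z}$ for all $d\ge1$.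
   Context: Binomial coefficients $\binom{n}{m}$ with $n\in\mathbb{Z}$ and $m\ge0$ an integer are understood as $n(n-1)\cdots(n-m+1)/m!$. The two power-series identities determine the sequences $n_{d\beta}$ and $n_S[dw]$ uniquely (by comparing coefficients of $q^d$ recursively in $d$). *)

(* Defs.v *)
From mathcomp Require Import all_boot all_order all_algebra.
Set Implicit Arguments. Unset Strict Implicit. Unset Printing Implicit Defensive.
Import Order.TTheory GRing.Theory Num.Theory.
Local Open Scope ring_scope.

Definition binz (n : int) (m : nat) : rat :=
  (\prod_(i < m) ((n - (i : nat)%:Z)%:~R : rat)) / (m`!)%:R.

(* Coefficient of q^l (l >= 1) in  sum_{d>=1} a_d sum_{k>=1} c(d,k) q^{dk}:
   the sum over d | l, with k = l / d. *)
Definition lambert_coef (a : nat -> rat) (c : nat -> nat -> rat) (l : nat) : rat :=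
  \sum_(d < l.+1 | (0 < d)%N && (d %| l)%N) a d * c d (l %/ d)%N.

(* Main.v *)
Require Import Defs.
From mathcomp Require Import all_boot all_order all_algebra zify ring lra.
Set Implicit Arguments. Unset Strict Implicit. Unset Printing Implicit Defensive.
Import Order.TTheory GRing.Theory Num.Theory.

Lemma prod_mult p k' (g : nat -> nat) : 0 < p ->
  \prod_(1 <= t < p * k' | p %| t) g t = \prod_(1 <= s < k') g (p * s).
Proof.
move=> p0; elim: k' => [|k' IH]; first by rewrite muln0 !big_geq.
case: (posnP k') => [->|k'0].
  rewrite muln1 [in RHS]big_geq // big_nat_cond big1 // => t /andP[/andP[t1 tp]].
  by move/dvdn_leq => /(_ t1); rewrite leqNgt tp.
rewrite (@big_cat_nat _ _ _ (p * k')) //=; last 2 first.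
- by rewrite muln_gt0 p0.
- by rewrite leq_mul2l leqnSn orbT.
rewrite IH big_nat_recr //=; congr (_ * _).
rewrite big_mkcond big_ltn ?ltn_pmul2l //= dvdn_mulr // big_nat_cond big1 ?muln1 //.
move=> t /andP[/andP[t1 t2] _]; case: ifP => // /dvdnP[q tq]; exfalso.
move: t1 t2; rewrite tq => h1 h2.
have e1 : k' < q by rewrite -(ltn_pmul2l p0) [p * q]mulnC.
have e2 : q < k'.+1 by rewrite -(ltn_pmul2l p0) [p * q]mulnC.
lia.
Qed.

Definition F (c k : nat) := \prod_(1 <= t < k) (k * c + t).
Definition U (p c k : nat) := \prod_(1 <= t < k | ~~ (p %| t)) (k * c + t).

Lemma F_split p c k' : 0 < p -> F c (p * k') = p ^ k'.-1 * F c k' * U p c (p * k').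
Proof.
move=> p0; rewrite /F /U (bigID (fun t => p %| t)) /= prod_mult //.
congr (_ * _).
have -> : \prod_(1 <= s < k') (p * k' * c + p * s) = \prod_(1 <= s < k') (p * (k' * c + s)).
  by apply: eq_bigr => s _; rewrite mulnDr mulnA.
by rewrite big_split /= prod_nat_const_nat subn1.
Qed.

Lemma F0 k : F 0 k = k.-1`!.
Proof.
rewrite /F fact_prod; case: k => [|k] /=; first by rewrite !big_geq.
by apply: eq_bigr => t _; rewrite muln0.
Qed.

Lemma binF c k : 0 < k -> 'C(k * c + k.-1, k.-1) * F 0 k = F c k.
Proof.
move=> k0.
have h1 : (k * c + k.-1)`! = (k * c)`! * F c k.
  rewrite !fact_prod (@big_cat_nat _ _ _ (k * c).+1) //=; last by lia.
  congr (_ * _); rewrite /F.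
  have -> : (k * c + k.-1).+1 = k + k * c by lia.
  rewrite -{1}[(k * c).+1]add1n big_addn addnK.
  by apply: eq_bigr => t _; rewrite addnC.
have h2 := bin_fact (leq_addl (k * c) k.-1).
rewrite h1 addnK mulnC in h2.
apply/eqP; rewrite -(@eqn_pmul2l (k * c)`!) ?fact_gt0 //; apply/eqP.
by rewrite -h2 F0; ring.
Qed.

Lemma G_rel p c k' : prime p -> 0 < k' ->
  'C(p * k' * c + (p * k').-1, (p * k').-1) * U p 0 (p * k') =
  'C(k' * c + k'.-1, k'.-1) * U p c (p * k').
Proof.
move=> pp k0; have p0 := prime_gt0 pp.
have pk0 : 0 < p * k' by rewrite muln_gt0 p0 k0.
have e1 := binF c pk0.
have e2 := binF c k0.
rewrite !F_split // -e2 in e1.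
apply/eqP; rewrite -(@eqn_pmul2l (p ^ k'.-1 * F 0 k')) ?muln_gt0 ?expn_gt0 ?p0 ?F0 ?fact_gt0 //.
apply/eqP; rewrite -F0.
transitivity ('C(p * k' * c + (p * k').-1, (p * k').-1) * (p ^ k'.-1 * F 0 k' * U p 0 (p * k'))).
  ring.
rewrite e1; ring.
Qed.

Lemma pair_split (f : nat -> nat) k (P : pred nat) :
  (forall t, 0 < t < k -> P (k - t) = P t) ->
  \prod_(1 <= t < k | P t) f t =
  \prod_(1 <= t < k | P t && (t.*2 < k)) (f t * f (k - t)) *
  \prod_(1 <= t < k | P t && (t.*2 == k)) f t.
Proof.
move=> HP; rewrite big_split /= [LHS](bigID (fun t => t.*2 < k)) /=.
rewrite [X in _ * X = _](bigID (fun t => t.*2 == k)) /= -!mulnA; congr (_ * _).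
rewrite mulnC; congr (_ * _); last first.
  apply: eq_bigl => t; case: (P t) => //=; lia.
rewrite big_nat_rev /= big_nat_cond [RHS]big_nat_cond.
apply: eq_big => [i|i _]; last by rewrite add1n subSS.
rewrite add1n subSS.
case hi: (1 <= i < k) => //=.
rewrite HP //; case: (P i) => //=; lia.
Qed.

Lemma pairs_mod k c (Q : pred nat) :
  \prod_(1 <= t < k | Q t && (t.*2 < k)) ((k * c + t) * (k * c + (k - t))) =
  \prod_(1 <= t < k | Q t && (t.*2 < k)) ((k * 0 + t) * (k * 0 + (k - t))) %[mod k ^ 2].
Proof.
apply: (big_ind2 (fun a b => a = b %[mod k ^ 2])) => //.
  by move=> x1 x2 y1 y2 h1 h2; rewrite -modnMm h1 h2 modnMm.
move=> t /andP[_ h].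
have -> : (k * c + t) * (k * c + (k - t)) = (c * c + c) * k ^ 2 + (k * 0 + t) * (k * 0 + (k - t)).
  have -> : k = t + (k - t) by lia.
  rewrite addKn; set s := k - t; ring.
by rewrite modnMDl.
Qed.

Lemma U_symm p k t : p %| k -> 0 < t < k -> (~~ (p %| k - t)) = ~~ (p %| t).
Proof. by move=> pk /andP[_ tk]; rewrite dvdn_subr // ltnW. Qed.

Lemma U_cong p c k : p %| k -> (forall t, t.*2 == k -> p %| t) ->
  U p c k = U p 0 k %[mod k ^ 2].
Proof.
move=> pk H; rewrite /U !(pair_split _ (fun t => @U_symm p k t pk)).
rewrite !(@big_pred0 _ _ _ _ _ (fun t => ~~ (p %| t) && (t.*2 == k))); last first.
- by move=> t /=; case e: (t.*2 == k); rewrite ?andbF // H ?e.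
- by move=> t /=; case e: (t.*2 == k); rewrite ?andbF // H ?e.
by rewrite !muln1 pairs_mod.
Qed.

Lemma mid_one (f : nat -> nat) m : odd m ->
  \prod_(1 <= t < m.*2 | ~~ (2 %| t) && (t.*2 == m.*2)) f t = f m.
Proof.
move=> om; rewrite -big_filter.
have -> : [seq t <- index_iota 1 m.*2 | ~~ (2 %| t) && (t.*2 == m.*2)] = [:: m].
  rewrite -(@filter_pred1_uniq _ (index_iota 1 m.*2) m); last first.
  - rewrite mem_index_iota; move: om; case: m => // m _; rewrite -addnn; lia.
  - exact: iota_uniq.
  apply: eq_filter => t /=; have -> : (t.*2 == m.*2) = (t == m) by lia.
  rewrite dvdn2.
  by case e: (t == m); rewrite ?andbF ?andbT // (eqP e) om.
by rewrite big_cons big_nil muln1.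
Qed.

Lemma U_cong2 c m : odd m ->
  U 2 c m.*2 = U 2 0 m.*2 * (c.*2 + 1) %[mod (m.*2) ^ 2].
Proof.
move=> om; have pk : 2 %| m.*2 by rewrite dvdn2 odd_double.
rewrite /U !(pair_split _ (fun t => @U_symm 2 m.*2 t pk)) !mid_one //.
rewrite -modnMml pairs_mod modnMml -mulnA; congr (_ * _ %% _).
rewrite -!muln2; ring.
Qed.

Lemma U0_coprime p k : prime p -> coprime p (U p 0 k).
Proof.
move=> pp; rewrite /U; apply: (big_ind (fun x => coprime p x)) => //.
- exact: coprimen1.
- by move=> x y hx hy; rewrite coprimeMr hx hy.
- by move=> t ht; rewrite muln0 add0n prime_coprime.
Qed.

Local Open Scope ring_scope.

Definition Gz (a k : nat) : int :=
  if a == 1%N then (-1) ^+ k.-1 else ('C(k * (a - 2) + k.-1, k.-1))%:Z.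
Definition hz (a k : nat) : int := (-1) ^+ (k * a + 1)%N * Gz a k.

Lemma nat_mod_dvdz (K x y : nat) : x = y %[mod K] -> (K%:Z %| x%:Z - y%:Z)%Z.
Proof. by move=> h; rewrite -eqz_mod_dvd; apply/eqP; rewrite !modz_nat h. Qed.

Lemma hz1 k : (0 < k)%N -> hz 1 k = 1.
Proof.
move=> k0; rewrite /hz /Gz eqxx -exprD.
have -> : (k * 1 + 1 + k.-1 = 2 * k)%N by lia.
by rewrite exprM expr2 mulrNN mulr1 expr1n.
Qed.

Lemma four_dvd c : (4 %| (c.*2 + 1)%N%:Z + (-1) ^+ (c + 1)%N)%Z.
Proof.
rewrite -signr_odd oddD /= addbT.
rewrite -[c in (c.*2 + 1)%N](odd_double_half c).
case: (odd c) => /=.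
- rewrite expr0 /=; apply/dvdz_mod0P.
  have -> : ((1 + (c./2).*2).*2 + 1)%N%:Z + 1 = (4 * (c./2 + 1))%N%:Z.
    by rewrite -PoszD; congr Posz; lia.
  by rewrite modz_nat; congr Posz; apply/eqP; rewrite -/(dvdn 4 _) dvdn_mulr.
- rewrite expr1; apply/dvdz_mod0P.
  have -> : ((0 + (c./2).*2).*2 + 1)%N%:Z + -1 = (4 * c./2)%N%:Z.
    by rewrite PoszD -addrA addrN addr0; congr Posz; lia.
  by rewrite modz_nat; congr Posz; apply/eqP; rewrite -/(dvdn 4 _) dvdn_mulr.
Qed.

Lemma sgn_eq (x y : nat) : odd x = odd y -> (-1) ^+ x = (-1) ^+ y :> int.
Proof. by move=> h; rewrite -signr_odd h signr_odd. Qed.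

Lemma hz_cong a p k : (0 < a)%N -> prime p -> (p %| k)%N -> (0 < k)%N ->
  ((p ^ (2 * logn p k))%N%:Z %| hz a k - hz a (k %/ p))%Z.
Proof.
move=> a0 pp pk k0; have p0 := prime_gt0 pp.
move: (pk) => /dvdnP [k' kE]; rewrite kE mulnK // mulnC.
have k'0 : (0 < k')%N by move: k0; rewrite kE muln_gt0 => /andP[].
case a1: (a == 1%N).
  by rewrite (eqP a1) !hz1 ?subrr ?dvdz0 // muln_gt0 p0.
have [c ac] : exists c, a = (c + 2)%N by exists (a - 2)%N; move: a0 a1; lia.
have e := G_rel c pp k'0.
rewrite /hz /Gz a1 ac addnK.
set q := (p ^ (2 * logn p (p * k')))%N.
set s1 := (-1) ^+ (p * k' * (c + 2) + 1)%N : int.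
set s2 := (-1) ^+ (k' * (c + 2) + 1)%N : int.
set C1 := 'C(p * k' * c + _, _) in e *; set C2 := 'C(k' * c + _, _) in e *.
set U0 := U p 0 (p * k') in e *; set Uc := U p c (p * k') in e *.
have cop0 : coprime q U0 by rewrite /q coprimeXl // U0_coprime.
have cop : coprimez q%:Z U0%:Z by exact: cop0.
rewrite -(Gauss_dvdzr _ cop).
have -> : U0%:Z * (s1 * C1%:Z - s2 * C2%:Z) = C2%:Z * (s1 * Uc%:Z - s2 * U0%:Z).
  have e' : C1%:Z * U0%:Z = C2%:Z * Uc%:Z by rewrite -!PoszM e.
  by rewrite mulrBr mulrBr mulrCA [U0%:Z * C1%:Z]mulrC e'; ring.
apply: dvdz_mull.
have qK : (q %| (p * k') ^ 2)%N.
  by rewrite /q (mulnC 2) expnM; apply: dvdn_exp2r; rewrite -p_part dvdn_part.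
have qKz : forall x : int, (((p * k') ^ 2)%N%:Z %| x)%Z -> (q%:Z %| x)%Z.
  by move=> x; apply: dvdz_trans.
case B: ((p == 2%N) && odd k').
  move: B => /andP[/eqP p2 ok]; subst p.
  have lg : logn 2 (2 * k') = 1%N.
    rewrite lognM // (@logn_coprime 2 k'); last by rewrite prime_coprime // dvdn2 ok.
    by rewrite addn0 lognE /= logn1.
  have hU := U_cong2 c ok; rewrite -mul2n in hU.
  have -> : s1 = -1.
    by rewrite /s1 -signr_odd oddD !oddM /= expr1.
  have -> : s2 = (-1) ^+ (c + 1)%N.
    by apply: sgn_eq; rewrite !oddD !oddM ok /= (oddD c 2) addbF.
  have -> : -1 * Uc%:Z - (-1) ^+ (c + 1)%N * U0%:Z =
     - (Uc%:Z - (U0 * (c.*2 + 1))%N%:Z) - U0%:Z * ((c.*2 + 1)%N%:Z + (-1) ^+ (c + 1)%N).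
    by rewrite PoszM; ring.
  apply: rpredB; first by rewrite rpredN; apply: qKz; apply: nat_mod_dvdz.
  apply: dvdz_mull; rewrite /q lg; exact: four_dvd.
have H : forall t, (t.*2 == p * k')%N -> (p %| t)%N.
  move=> t /eqP ht; case p2: (p == 2%N).
    move: B; rewrite p2 /= => ok; rewrite (eqP p2) in ht *.
    have -> : t = k' by lia.
    by rewrite dvdn2 ok.
  have : (p %| t * 2)%N by rewrite muln2 ht dvdn_mulr.
  rewrite Gauss_dvdl // prime_coprime //.
  by apply/negP => /(dvdn_leq (isT : (0 < 2)%N)); move: (prime_gt1 pp) p2; lia.
have hU := U_cong c (dvdn_mulr k' (dvdnn p)) H.
have -> : s2 = s1.
  apply: sgn_eq; rewrite !oddD !oddM.
  case p2: (p == 2%N).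
    by move: B; rewrite p2 (eqP p2) /= => ->.
  have -> : odd p by case: (even_prime pp) => // h; rewrite h in p2.
  by [].
rewrite -mulrBr; apply: dvdz_mull; apply: qKz; exact: nat_mod_dvdz.
Qed.

Lemma dvd_div_p p d l : prime p -> (0 < l)%N -> (d %| l)%N ->
  (logn p d < logn p l)%N -> (d %| l %/ p)%N.
Proof.
move=> pp l0 /dvdnP[e le] lg.
have p0 := prime_gt0 pp.
have [e0 d0] : (0 < e)%N /\ (0 < d)%N by move: l0; rewrite le muln_gt0 => /andP[].
rewrite le lognM // in lg.
have : (0 < logn p e)%N by lia.
rewrite logn_gt0 mem_primes => /and3P[_ _ /dvdnP[f ef]].
by rewrite le ef mulnAC mulnK // dvdn_mull.
Qed.

Definition T (w : nat) (u v : nat -> int) (l d : nat) : int :=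
  (d ^ 2)%N%:Z * (u d - hz (d * w) (l %/ d) * v d).

Definition Dsum w u v l (P : pred nat) : int :=
  \sum_(d < l.+1 | (0 < d)%N && (d %| l)%N && P d) T w u v l d.

Lemma eq_dvdz_helper (q x y : int) : y = 0 -> (q %| x - y)%Z -> (q %| x)%Z.
Proof. by move=> -> ; rewrite subr0. Qed.

Lemma key_p w u v l p : (0 < w)%N -> (0 < l)%N -> prime p -> (p %| l)%N ->
  (forall l', (0 < l')%N -> (l' %| l)%N -> (l' < l)%N -> Dsum w u v l' predT = 0) ->
  ((p ^ (2 * logn p l))%N%:Z %| Dsum w u v l (fun d => (d < l)%N))%Z.
Proof.
move=> w0 l0 pp pl H.
have p0 := prime_gt0 pp; have p1 := prime_gt1 pp.
set r := logn p l; set l' := (l %/ p)%N.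
have lE : l = (l' * p)%N by rewrite divnK.
have l'0 : (0 < l')%N by move: l0; rewrite lE muln_gt0 => /andP[].
have l'l : (l' < l)%N by rewrite [X in (_ < X)%N]lE -[X in (X < _)%N]muln1 ltn_pmul2l.
have l'dl : (l' %| l)%N by rewrite [X in (_ %| X)%N]lE dvdn_mulr.
rewrite /Dsum (bigID (fun d : 'I_l.+1 => ((d : nat) %| l')%N)) /=.
apply: rpredD.
  have Z := H l' l'0 l'dl l'l.
  apply: (@eq_dvdz_helper _ _ _ Z); rewrite /Dsum.
  rewrite (big_ord_widen_cond _ (fun d => (0 < d)%N && (d %| l')%N && predT d) _ (_ : l'.+1 <= l.+1)%N); last by rewrite ltnS ltnW.
  rewrite [X in _ - X](eq_bigl (fun d : 'I_l.+1 => (0 < d)%N && (d %| l)%N && (d < l)%N && (d %| l')%N)); last first.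
    move=> d /=; rewrite andbT.
    case d0: (0 < (d : nat))%N => //=.
    case dl': ((d : nat) %| l')%N; rewrite /= ?andbF //.
    have -> : ((d : nat) %| l)%N by apply: dvdn_trans dl' l'dl.
    have dle : ((d : nat) <= l')%N by apply: dvdn_leq.
    by rewrite /= andbT; apply/idP/idP => _; lia.
  rewrite -sumrB; apply: rpred_sum => -[d dlt1] /= /andP[/andP[/andP[d0 dl] dlt] dl'].
  rewrite /T -mulrBr.
  set A := hz (d * w) (l %/ d); set B := hz (d * w) (l' %/ d).
  have -> : u d - A * v d - (u d - B * v d) = (B - A) * v d by ring.
  rewrite /A /B.
  have [j lj] : exists j, l' = (j * d)%N by apply/dvdnP.
  have j0 : (0 < j)%N by move: l'0; rewrite lj muln_gt0 => /andP[].
  have e1 : (l %/ d = p * j)%N by rewrite lE lj mulnAC mulnK // mulnC.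
  clear dlt1.
  have e2 : (l' %/ d = j)%N by rewrite lj mulnK.
  rewrite e1 e2.
  have lg : r = (logn p d + logn p (p * j))%N by rewrite /r -lognM ?muln_gt0 ?p0 // lE lj; congr logn; ring.
  rewrite lg mulnDr expnD PoszM; apply: dvdz_mul.
    have : (p ^ logn p d %| d)%N by rewrite pfactor_dvdn.
    by move/(dvdn_exp2r 2); rewrite -expnM mulnC.
  apply: dvdz_mulr.
  have hc := @hz_cong (d * w) p (p * j) (_ : (0 < d * w)%N) pp (dvdn_mulr j (dvdnn p)) (_ : (0 < p * j)%N).
  rewrite mulKn // in hc; rewrite -rpredN opprB; apply: hc; by rewrite muln_gt0 ?d0 ?w0 ?p0.
apply: rpred_sum => d /andP[/andP[/andP[d0 dl] dlt] ndl'].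
have rd : (r <= logn p d)%N.
  rewrite leqNgt; apply/negP => h; move/negP: ndl'; apply.
  exact: dvd_div_p.
rewrite /T; apply: dvdz_mulr.
have : (p ^ r %| d)%N by rewrite pfactor_dvdn.
by move/(dvdn_exp2r 2); rewrite -expnM mulnC.
Qed.

Lemma key w u v l : (0 < w)%N -> (0 < l)%N ->
  (forall l', (0 < l')%N -> (l' %| l)%N -> (l' < l)%N -> Dsum w u v l' predT = 0) ->
  ((l ^ 2)%N%:Z %| Dsum w u v l (fun d => (d < l)%N))%Z.
Proof.
move=> w0 l0 H; rewrite dvdzE /=.
apply/dvdn_partP; first by rewrite expn_gt0 l0.
move=> p; rewrite mem_primes => /and3P[pp _ pl2].
have pl : (p %| l)%N by move: pl2; rewrite Euclid_dvdX // andbT.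
rewrite p_part lognX.
exact: (key_p w0 l0 pp pl H).
Qed.


Lemma fact_ord m : m`! = \prod_(i < m) i.+1.
Proof. by rewrite fact_prod big_add1 /= big_mkord. Qed.

Lemma hNlem (k c : nat) : (0 < k)%N ->
  k%:Z * ((c + 2)%N%:Z - 1) - 1 = (k * c + k.-1)%N%:Z.
Proof. by case: k => // k _ /=; rewrite !PoszD !PoszM; ring. Qed.

Lemma binzE (a k : nat) : (0 < a)%N -> (0 < k)%N ->
  binz (k%:Z * (a%:Z - 1) - 1) k.-1 = (Gz a k)%:~R.
Proof.
move=> a0 k0; rewrite /binz /Gz.
have f0 : (k.-1)`!%:R != 0 :> rat by rewrite pnatr_eq0 -lt0n fact_gt0.
case a1: (a == 1%N).
  rewrite (eqP a1) subrr mulr0 sub0r.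
  rewrite (eq_bigr (fun i : 'I_k.-1 => (-1) * ((i : nat).+1)%:R)); last first.
    by move=> i _; rewrite -opprD rmorphN /= mulN1r -[1 + _]/(Posz (1 + i)%N) add1n.
  rewrite big_split /= prodr_const card_ord -natr_prod -fact_ord mulfK //.
  by rewrite rmorphXn /= rmorphN1.
have [c ac] : exists c, a = (c + 2)%N by exists (a - 2)%N; move: a0 a1; lia.
rewrite ac addnK.
rewrite hNlem //.
set N := (k * c + k.-1)%N.
rewrite (eq_bigr (fun i : 'I_k.-1 => ((N - i)%N)%:R)); last first.
  move=> i _; rewrite subzn //; last by rewrite /N; move: (ltn_ord i); lia.
rewrite -natr_prod -ffact_prod -bin_ffact natrM mulfK //.
Qed.

Definition Rsum w (u v : nat -> rat) l (P : pred nat) : rat :=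
  \sum_(d < l.+1 | (0 < d)%N && (d %| l)%N && P d)
     (d ^ 2)%N%:R * (u d - (hz (d * w) (l %/ d))%:~R * v d).

Lemma Dsum_cast w (U V : nat -> int) (u v : nat -> rat) l (P : pred nat) :
  (forall d, (0 < d)%N -> (d %| l)%N -> P d -> (U d)%:~R = u d /\ (V d)%:~R = v d) ->
  (Dsum w U V l P)%:~R = Rsum w u v l P.
Proof.
move=> H; rewrite /Dsum /Rsum rmorph_sum; apply: eq_bigr => d /andP[/andP[d0 dl] Pd].
have [hu hv] := H d d0 dl Pd.
rewrite /T !rmorphM !rmorphB /= !rmorphM /= hu hv; congr (_ * _).
Qed.

Lemma hz_1 a : hz a 1 = (-1) ^+ (a + 1)%N.
Proof. by rewrite /hz /Gz mul1n; case: (a == 1%N) => /=; rewrite ?mulr1 // bin0 mulr1. Qed.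

Lemma step w (u v : nat -> rat) l : (0 < w)%N -> (0 < l)%N ->
  (forall l', (0 < l')%N -> Rsum w u v l' predT = 0) ->
  (forall d, (0 < d)%N -> (d < l)%N -> u d \is a Num.int /\ v d \is a Num.int) ->
  exists t : int, u l - (hz (l * w) 1)%:~R * v l = t%:~R.
Proof.
move=> w0 l0 Hrel Hint.
set U := fun d => numq (u d); set V := fun d => numq (v d).
have UV : forall d, (0 < d)%N -> (d < l)%N -> (U d)%:~R = u d /\ (V d)%:~R = v d.
  by move=> d d0 dl; have [hu hv] := Hint d d0 dl; rewrite /U /V !numqK.
have HD : forall l', (0 < l')%N -> (l' %| l)%N -> (l' < l)%N -> Dsum w U V l' predT = 0.
  move=> l' l'0 l'l l'lt; apply: (@intr_inj rat).
  rewrite (@Dsum_cast w U V u v) ?Hrel // => d d0 dl _; apply: UV => //.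
  exact: leq_ltn_trans (dvdn_leq l'0 dl) l'lt.
have /dvdzP [t0 ht0] := key w0 l0 HD.
exists (- t0).
have R := Hrel l l0.
rewrite /Rsum (bigID (fun d : 'I_l.+1 => ((d : nat) < l)%N)) /= in R.
rewrite [X in _ + X](big_pred1 ord_max) /= in R; last first.
  move=> d /=; rewrite andbT -val_eqE /=.
  have hd := ltn_ord d.
  case e: ((d : nat) == l); first by rewrite (eqP e) l0 dvdnn ltnn.
  by rewrite ltnNge; apply/negbTE; rewrite negb_and negbK; apply/orP; right; lia.
have hS : Dsum w U V l (fun d => (d < l)%N) = t0 * (l ^ 2)%N%:Z by [].
have E := @Dsum_cast w U V u v l (fun d => (d < l)%N) (fun d d0 _ dl => UV d d0 dl).
rewrite hS /Rsum in E.
rewrite (eq_bigl (fun i : 'I_l.+1 => (0 < i)%N && (i %| l)%N && (i < l)%N)) in R; last by move=> i; rewrite andbT.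
rewrite -E divnn l0 in R.
have l2 : (l ^ 2)%N%:R != 0 :> rat by rewrite pnatr_eq0 -lt0n expn_gt0 l0.
apply: (mulfI l2); move: R; rewrite rmorphM /= rmorphN /=.
move/eqP; rewrite addrC addr_eq0 => /eqP ->.
by rewrite mulrN mulrC.
Qed.

Theorem theorem1p8 (w : nat) (hw : (0 < w)%N) (N I nb nS : nat -> rat)
  (hNI : forall d : nat, (0 < d)%N ->
     N d = (-1) ^+ (d * w + 1)%N * (d * w)%:R * I d)
  (hI : forall l : nat, (0 < l)%N ->
     I l = lambert_coef nb (fun _ k => 1 / (k%:R ^+ 3)) l)
  (hN : forall l : nat, (0 < l)%N ->
     N l = lambert_coef nS
             (fun d k => 1 / (k%:R ^+ 2) *
                binz (k%:Z * ((d * w)%:Z - 1) - 1) k.-1) l) :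
  (forall d : nat, (0 < d)%N -> nS d \is a Num.int) <->
  (forall d : nat, (0 < d)%N -> (d * w)%:R * nb d \is a Num.int).
Proof.
set m := fun d => (d * w)%:R * nb d.
have rel : forall l, (0 < l)%N -> Rsum w m nS l predT = 0.
  move=> l l0; rewrite /Rsum.
  rewrite (eq_bigl (fun d : 'I_l.+1 => (0 < d)%N && (d %| l)%N)); last by move=> d; rewrite andbT.
  under eq_bigr do rewrite mulrBr.
  rewrite sumrB.
  have E1 : \sum_(d < l.+1 | (0 < d)%N && (d %| l)%N) (d ^ 2)%N%:R * m d =
            (l ^ 2)%N%:R * (l * w)%N%:R * I l.
    rewrite hI // /lambert_coef mulr_sumr; apply: eq_bigr => -[d dlt] /= /andP[d0 dl]; clear dlt.
    have lk : l = (l %/ d * d)%N by rewrite divnK.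
    set k := (l %/ d)%N in lk *.
    have k0 : (0 < k)%N by move: l0; rewrite lk muln_gt0 => /andP[].
    have kn : k%:R != 0 :> rat by rewrite pnatr_eq0 -lt0n.
    rewrite /m lk !natrX !natrM; field; exact: kn.
  have E2 : \sum_(d < l.+1 | (0 < d)%N && (d %| l)%N)
              (d ^ 2)%N%:R * ((hz (d * w) (l %/ d))%:~R * nS d) =
            (-1) ^+ (l * w + 1)%N * (l ^ 2)%N%:R * N l.
    rewrite hN // /lambert_coef mulr_sumr; apply: eq_bigr => -[d dlt] /= /andP[d0 dl]; clear dlt.
    have lk : l = (l %/ d * d)%N by rewrite divnK.
    set k := (l %/ d)%N in lk *.
    have k0 : (0 < k)%N by move: l0; rewrite lk muln_gt0 => /andP[].
    have kn : k%:R != 0 :> rat by rewrite pnatr_eq0 -lt0n.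
    rewrite binzE ?muln_gt0 ?d0 ?hw // /hz [X in _ * (X * _)]rmorphM /= rmorph_sign.
    have -> : (l * w + 1 = k * (d * w) + 1)%N by rewrite lk mulnA.
    rewrite lk !natrX !natrM; field; exact: kn.
  rewrite E1 E2 hNI //.
  set s := (-1) ^+ (l * w + 1)%N : rat.
  have ss : s * s = 1 by rewrite /s -exprD -signr_odd oddD addbb.
  clearbody s.
  set A := (l ^ 2)%N%:R : rat; set B := (l * w)%N%:R : rat.
  have -> : s * A * (s * B * I l) = (s * s) * (A * B * I l) by ring.
  by rewrite ss mul1r subrr.
have stepR := fun l l0 Hi => @step w m nS l hw l0 rel Hi.
split.
  move=> HnS l; elim/ltn_ind: l => l IH l0.
  have [t ht] := stepR l l0 (fun d d0 dl => conj (IH d dl d0) (HnS d d0)).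
  rewrite -/(m l) -[m l](subrK ((hz (l * w) 1)%:~R * nS l)) ht.
  by rewrite rpredD ?intr_int // rpredM ?intr_int ?HnS.
move=> Hm l; elim/ltn_ind: l => l IH l0.
have [t ht] := stepR l l0 (fun d d0 dl => conj (Hm d d0) (IH d dl d0)).
have e : (hz (l * w) 1)%:~R * nS l = m l - t%:~R by rewrite -ht opprB addrC subrK.
have -> : nS l = (hz (l * w) 1)%:~R * (m l - t%:~R).
  by rewrite -e hz_1 rmorph_sign signrMK.
by rewrite rpredM ?intr_int // rpredB ?intr_int ?Hm.
Qed.
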